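(* If $r$ divides $s$, then $\tau^*(n,P^{(r)}_s)\le\left(\left(\frac{r}{s}\right)^r+o(1)\right)\binom{n}{r}$, where $o(1)\to0$ as $n\to\infty$ with $r,s$ fixed.
   Context: $K^{(r)}_n$ is the ordered complete $r$-uniform hypergraph on $[n]=\{1,\dots,n\}$ with its natural order; a copy of an ordered hypergraph $H$ in $K^{(r)}_n$ is the image of $H$ under an order-preserving injection $V(H)\to[n]$. The natural path $P^{(r)}_s$ has vertices $v_1<\dots<v_s$ and edges all sets of $r$ consecutive vertices $\{v_j,\dots,v_{j+r-1}\}$, $1\le j\le s-r+1$. A fractional $H$-transversal is a function $w$ from the edges of $K^{(r)}_n$ to $[0,\infty)$ such that $\sum_{e\in E(H')}w(e)\ge1$ for every copy $H'$ of $H$ in $K^{(r)}_n$; $\tau^*(n,H)$ is the minimum of $\sum_e w(e)$ over all fractional $H$-transversals. *)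

(* Defs.v *)
From HB Require Import structures.
From mathcomp Require Import all_boot all_order all_algebra.
From mathcomp Require Import classical_sets reals.
Set Implicit Arguments. Unset Strict Implicit. Unset Printing Implicit Defensive.
Import Order.TTheory GRing.Theory Num.Theory.
Local Open Scope ring_scope.

(* Vertices of K^(r)_n are 'I_n (= {0,..,n-1}, natural order); its edges are
   the r-element subsets e : {set 'I_n} with #|e| = r. *)
Definition is_edge (n r : nat) (e : {set 'I_n}) : bool := #|e| == r.

(* A copy of the natural path P^(r)_s is given by a strictly increasing
   (= order-preserving injective) map f : 'I_s -> 'I_n.  Its j-th edge
   (0 <= j <= s - r) is the image of the window {j, ..., j+r-1}. *)
Definition order_preserving (s n : nat) (f : 'I_s -> 'I_n) : Prop :=
  forall i j : 'I_s, (i < j)%N -> (f i < f j)%N.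

Definition path_window (s r j : nat) : {set 'I_s} :=
  [set i : 'I_s | (j <= i < j + r)%N].

Definition path_copy_edges (s r n : nat) (f : 'I_s -> 'I_n) : {set {set 'I_n}} :=
  [set f @: path_window s r j | j : 'I_(s - r + 1)].

Definition frac_transversal (R : realType) (n r s : nat)
    (w : {set 'I_n} -> R) : Prop :=
  (forall e : {set 'I_n}, @is_edge n r e -> 0 <= w e) /\
  (forall f : 'I_s -> 'I_n, @order_preserving s n f ->
     1 <= \sum_(e | e \in @path_copy_edges s r n f) w e).

Definition total_weight (R : realType) (n r : nat) (w : {set 'I_n} -> R) : R :=
  \sum_(e : {set 'I_n} | @is_edge n r e) w e.

(* tau^*(n, P^(r)_s): the minimum (= infimum, the LP optimum being attained)
   of the total weight over all fractional transversals. *)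
Definition tau_star_path (R : realType) (n r s : nat) : R :=
  inf [set x : R | exists w : {set 'I_n} -> R,
         @frac_transversal R n r s w /\ x = @total_weight R n r w].

(* Main.v *)
Require Import Defs.
From HB Require Import structures.
From mathcomp Require Import all_boot all_order all_algebra.
From mathcomp Require Import classical_sets reals.
From mathcomp Require Import zify ring lra.
Import Order.TTheory GRing.Theory Num.Theory.
Local Open Scope ring_scope.

Local Open Scope nat_scope.
Lemma shift_sum (c : nat -> nat) (M K : nat) :
  (forall i, c i <= K) -> forall d,
  \sum_(0 <= j < M) c (j + d) <= \sum_(0 <= j < M) c j + d * K.
Proof.
move=> cK; elim=> [|d IH].
  by rewrite mul0n addn0; under eq_bigr do rewrite addn0.
have E : \sum_(0 <= j < M) c (j + d.+1) + c d = \sum_(0 <= j < M) c (j + d) + c (M + d).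
  have : \sum_(0 <= j < M.+1) c (j + d) = \sum_(0 <= j < M.+1) c (j + d) by [].
  rewrite {1}big_nat_recl // big_nat_recr //= add0n => <-.
  rewrite addnC; congr (_ + _); apply: eq_bigr => i _; by rewrite addnS addSn.
have := cK (M + d); rewrite mulSn; lia.
Qed.

Lemma count_const (c : nat -> nat) (M d K : nat) :
  (forall i, c i <= K) -> (forall j, j < M -> c j <= c (j + d)) ->
  M <= \sum_(0 <= j < M) (c j == c (j + d)) + d * K.
Proof.
move=> cK mono.
have h1 : M <= \sum_(0 <= j < M) ((c j == c (j + d)) + (c (j + d) - c j)).
  have hM : M = \sum_(0 <= j < M) 1 by rewrite sum_nat_const_nat muln1 subn0.
  rewrite {1}hM.
  rewrite big_nat_cond [X in _ <= X]big_nat_cond; apply: leq_sum => j /andP[/andP[_ jM] _].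
  have := mono j jM; case: eqP => [->|ne] /=; lia.
have h2 : \sum_(0 <= j < M) (c (j + d) - c j) + \sum_(0 <= j < M) c j
          = \sum_(0 <= j < M) c (j + d).
  rewrite -big_split /=; apply: eq_big_nat => j /andP[_ jM]; rewrite subnK //; exact: mono.
have := shift_sum c M K cK d; rewrite big_split /= in h1; lia.
Qed.

Local Open Scope ring_scope.

Definition blk (n m b : nat) : {set 'I_n} := [set x : 'I_n | (x %/ m == b)%N].

Lemma card_blk n m b : (0 < m)%N -> (#|blk n m b| <= m)%N.
Proof.
move=> m0.
pose g (x : 'I_n) : 'I_m := Ordinal (ltn_pmod x m0).
rewrite -(card_in_imset (f := g)); last first.
  move=> x y; rewrite !inE => /eqP hx /eqP hy /(congr1 val) /= hm.
  apply: val_inj; rewrite /= (divn_eq x m) (divn_eq y m) hx hy hm //.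
by rewrite -[X in (_ <= X)%N](card_ord m) max_card.
Qed.

Lemma sum_edges_blk n r k m : (0 < m)%N ->
  (\sum_(e : {set 'I_n} | is_edge r e) \sum_(b < k) (e \subset blk n m b) <= k * 'C(m, r))%N.
Proof.
move=> m0; rewrite exchange_big /=.
rewrite -[X in (_ <= X * _)%N](card_ord k) -sum_nat_const.
apply: leq_sum => b _.
have -> : (\sum_(e | is_edge r e) (e \subset blk n m b) =
           #|[set e : {set 'I_n} | e \subset blk n m b & #|e| == r]|)%N.
  rewrite -sum1_card big_mkcond [RHS]big_mkcond /=; apply: eq_bigr => e _.
  by rewrite !inE /is_edge andbC; case: (#|e| == r); case: (e \subset _).
by rewrite cards_draws leq_bin2l // card_blk.
Qed.

Lemma path_count n r s k (f : 'I_s -> 'I_n) : (1 <= r)%N -> s = (k * r)%N -> (0 < k)%N ->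
  order_preserving f ->
  (k <= \sum_(j : 'I_(s - r + 1))
         \sum_(b < k) (f @: path_window s r j \subset blk n (n %/ k + 1) b))%N.
Proof.
move=> r1 sk k0 fop.
set m := (n %/ k + 1)%N.
have s0 : (0 < s)%N by rewrite sk muln_gt0 k0.
set i0 : 'I_s := Ordinal s0.
set c := fun i : nat => ((f (insubd i0 i) : nat) %/ m)%N.
have nkm : (n < m * k)%N by rewrite /m mulnDl mul1n {1}(divn_eq n k) ltn_add2l ltn_pmod.
have cK : forall i, (c i <= k.-1)%N.
  move=> i; rewrite /c -ltnS prednK // ltn_divLR; last by rewrite /m addn1.
  have := ltn_ord (f (insubd i0 i)); nia.
have fmono : forall x y : 'I_s, (x <= y)%N -> (f x <= f y)%N.
  move=> x y; rewrite leq_eqVlt => /orP[/eqP/val_inj -> //|/fop]; exact: ltnW.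
have cval : forall y : 'I_s, c y = ((f y : nat) %/ m)%N by move=> y; rewrite /c valKd.
have cmono : forall i1 i2, (i1 <= i2)%N -> (i2 < s)%N -> (c i1 <= c i2)%N.
  move=> i1 i2 h12 h2s.
  have h1s : (i1 < s)%N by apply: leq_ltn_trans h2s.
  move: (cval (Ordinal h1s)) (cval (Ordinal h2s)) => /= -> ->.
  by apply: leq_div2r; apply: fmono.
have hcount := count_const c (s - r + 1) (r - 1) k.-1 cK.
have sr : (r <= s)%N by rewrite sk leq_pmull.
have := hcount (fun j (hj : (j < s - r + 1)%N) => cmono j (j + (r - 1))%N (leq_addr _ _) ltac:(lia)).
rewrite big_mkord => hc.
have hk : (k <= \sum_(j < s - r + 1) (c j == c (j + (r - 1))%N))%N by nia.
apply: (leq_trans hk); apply: leq_sum => j _.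
case: eqP => // ceq.
have cjk : (c j < k)%N by have := cK j; lia.
rewrite (bigD1 (Ordinal cjk)) //= ; apply: leq_trans (leq_addr _ _); rewrite lt0b.
apply/fintype.subsetP => x /imsetP [i]; rewrite inE => /andP[ji ijr] ->.
rewrite inE -cval; apply/eqP/anti_leq.
have js : (j + (r - 1) < s)%N by have := ltn_ord j; lia.
apply/andP; split; last by apply: cmono => //; exact: ltn_ord.
rewrite ceq; apply: cmono => //; lia.
Qed.

Lemma bern (R : realFieldType) (x : R) (r : nat) : 0 <= x <= 1 ->
  (1 + x) ^+ r <= 1 + x * (r%:R * 2 ^+ r).
Proof.
move=> /andP[x0 x1]; elim: r => [|r IH]; first by rewrite expr0 mul0r mulr0 addr0.
have p2 : 1 <= (2 : R) ^+ r by rewrite exprn_ege1 // ler1n.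
have r0 : 0 <= (r%:R : R) by rewrite ler0n.
rewrite exprS exprS mulrS.
have h : (1 + x) * (1 + x) ^+ r <= (1 + x) * (1 + x * (r%:R * 2 ^+ r)).
  by rewrite ler_wpM2l // addr_ge0.
apply: (le_trans h).
set t := (2 : R) ^+ r.
have t1 : 1 <= t by [].
have tp : 0 <= x * (r%:R * t) by rewrite mulr_ge0 // mulr_ge0 // (le_trans _ t1).
clearbody t; nra.
Qed.

Lemma step_a (n k r : nat) : (0 < k)%N ->
  (k ^ r * (n %/ k + 1) ^_ r <= \prod_(i < r) (n - i + k))%N.
Proof.
move=> k0.
have E : forall a, (a ^ r = \prod_(i < r) a)%N by move=> a; rewrite prod_nat_const card_ord.
rewrite ffact_prod E -big_split /=.
apply: leq_prod => i _.
have := divn_eq n k; have := ltn_pmod n k0; have := ltn_ord i.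
move: (n %/ k)%N => q; move: (i : nat) => j. nia.
Qed.

Lemma step_b (n k r : nat) : (r <= n)%N ->
  ((\prod_(i < r) (n - i + k)) * (n - r) ^ r <= (\prod_(i < r) (n - i)) * (n - r + k) ^ r)%N.
Proof.
move=> rn.
have E : forall a, (a ^ r = \prod_(i < r) a)%N by move=> a; rewrite prod_nat_const card_ord.
rewrite !E.
rewrite -!big_split /=; apply: leq_prod => i _.
have := ltn_ord i; move: (i : nat) => j; nia.
Qed.

Lemma step_c (R : realType) (a k r : nat) (d : R) : (0 < a)%N -> (k <= a)%N -> 0 < d ->
  (k%:R * r%:R * 2 ^+ r) / d <= a%:R ->
  ((a + k)%:R : R) ^+ r <= (1 + d) * (a%:R ^+ r).
Proof.
move=> a0 ka d0 hB.
have ar0 : (0 : R) < a%:R by rewrite ltr0n.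
set x : R := k%:R / a%:R.
have -> : ((a + k)%:R : R) = a%:R * (1 + x).
  by rewrite /x natrD mulrDr mulr1 mulrCA divff ?mulr1 // gt_eqF.
rewrite exprMn mulrC ler_wpM2r //; first by rewrite exprn_ge0 // ltW.
have x0 : 0 <= x by rewrite /x divr_ge0 ?ler0n ?ltW.
have x1 : x <= 1 by rewrite /x ler_pdivrMr // mul1r ler_nat.
apply: (le_trans (bern _ x r (introT andP (conj x0 x1)))); rewrite lerD2l.
rewrite /x mulrAC ler_pdivrMr // -ler_pdivrMl // mulrC.
by rewrite mulrA.
Qed.

Lemma asym (R : realType) (k r : nat) (eps : R) : (0 < k)%N -> 0 < eps ->
  exists N, forall n, (N <= n)%N ->
    ('C(n %/ k + 1, r))%:R <= ((k%:R)^-1 ^+ r + eps) * ('C(n, r))%:R.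
Proof.
move=> k0 e0.
have kR : (0 : R) < k%:R by rewrite ltr0n.
set d : R := eps * k%:R ^+ r.
have d0 : 0 < d by rewrite /d mulr_gt0 // exprn_gt0.
set B := Num.Def.archi_bound ((k%:R * r%:R * 2 ^+ r) / d).
have hB : (k%:R * r%:R * 2 ^+ r) / d < B%:R.
  apply: archi_boundP; apply: divr_ge0; last exact: ltW.
  by rewrite !mulr_ge0 ?ler0n ?exprn_ge0.
exists (r + k + B)%N => n hn.
have rn : (r <= n)%N by lia.
have hab := leq_trans (leq_mul (step_a n k r k0) (leqnn ((n - r) ^ r)%N)) (step_b n k r rn).
have a0 : (0 < n - r)%N by lia.
have ka : (k <= n - r)%N by lia.
have hBa : (B%:R : R) <= (n - r)%N%:R by rewrite ler_nat; lia.
have hc := @step_c R (n - r)%N k r d a0 ka d0 (le_trans (ltW hB) hBa).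
rewrite -ffact_prod -!bin_ffact in hab.
move: hab; rewrite -(ler_nat R) !natrM !natrX => hab.
set Cm := ('C(n %/ k + 1, r))%:R : R in hab *.
set Cn := ('C(n, r))%:R : R in hab *.
set f := (r`!)%:R : R in hab.
set A := ((n - r)%N%:R : R) ^+ r in hab hc.
have A0 : 0 < A by rewrite /A exprn_gt0 // ltr0n.
have f0 : 0 < f by rewrite /f ltr0n fact_gt0.
have h1 : k%:R ^+ r * Cm <= (1 + d) * Cn.
  have h2 : k%:R ^+ r * (Cm * f) * A <= (1 + d) * (Cn * f) * A.
    apply: (le_trans hab); rewrite [(1 + d) * _]mulrC -[X in _ <= X]mulrA ler_wpM2l //.
    by rewrite /Cn /f mulr_ge0 // ler0n.
  rewrite ler_pM2r // !mulrA ler_pM2r // in h2.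
have kr0 : (0 : R) < k%:R ^+ r by rewrite exprn_gt0.
rewrite -(mulKf (negbT (gt_eqF kr0)) Cm).
apply: le_trans (_ : (k%:R ^+ r)^-1 * ((1 + d) * Cn) <= _).
  by rewrite ler_wpM2l // invr_ge0 ltW.
rewrite le_eqVlt; apply/orP; left; apply/eqP.
rewrite /d exprVn mulrA mulrDr mulr1 [_^-1 * (eps * _)]mulrC -mulrA mulfV ?mulr1 //.
by rewrite gt_eqF.
Qed.

Lemma window_inj s r M (j1 j2 : 'I_M) : (1 <= r)%N -> (M <= s)%N ->
  path_window s r j1 = path_window s r j2 -> j1 = j2.
Proof.
move=> r1 Ms.
have H : forall a b : 'I_M, path_window s r a = path_window s r b -> (b <= a)%N.
  move=> a b hab.
  have hs : (a < s)%N by apply: leq_trans (ltn_ord a) Ms.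
  have : Ordinal hs \in path_window s r a by rewrite inE /= leqnn /=; lia.
  by rewrite hab inE /= => /andP[].
move=> h; apply: val_inj; apply/eqP; rewrite eqn_leq H // H //.
Qed.

Theorem proposition3p2 (R : realType) (r s : nat) :
  (1 <= r)%N -> (0 < s)%N -> (r %| s)%N ->
  forall eps : R, 0 < eps ->
  exists N : nat, forall n : nat, (N <= n)%N ->
    tau_star_path R n r s <= ((r%:R / s%:R) ^+ r + eps) * ('C(n, r))%:R.
Proof.
move=> r1 s0 rs eps e0.
set k := (s %/ r)%N.
have sk : s = (k * r)%N by rewrite /k divnK.
have k0 : (0 < k)%N by rewrite /k divn_gt0 // dvdn_leq.
have [N HN] := asym R k r eps k0 e0.
exists N => n nN.
set m := (n %/ k + 1)%N.
have kR : (0 : R) < k%:R by rewrite ltr0n.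
pose w := fun e : {set 'I_n} => (k%:R)^-1 * (\sum_(b < k) (e \subset blk n m b))%:R : R.
have wt : @frac_transversal R n r s w.
  split; first by move=> e _; rewrite /w mulr_ge0 // ?invr_ge0 ?ler0n // ltW.
  move=> f fop.
  have finj : injective f.
    move=> x y fxy; case: (ltngtP x y) => [/fop|/fop|/val_inj] //; rewrite fxy ltnn //.
  rewrite /path_copy_edges big_imset /=; last first.
    move=> j1 j2 _ _ /imset_inj => /(_ finj) /window_inj; apply => //; lia.
  rewrite /w -mulr_sumr -natr_sum.
  apply: le_trans (_ : (k%:R)^-1 * k%:R <= _); first by rewrite mulVf // gt_eqF.
  by rewrite ler_wpM2l ?invr_ge0 ?(ltW kR) // ler_nat path_count.
have tau_le : tau_star_path R n r s <= @total_weight R n r w.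
  apply: ge_inf; last by exists w.
  exists 0 => x [w' [[w'0 _] ->]].
  by rewrite /total_weight sumr_ge0 // => e; exact: w'0.
have tw : @total_weight R n r w <= ('C(m, r))%:R.
  rewrite /total_weight /w -mulr_sumr -natr_sum.
  apply: le_trans (_ : (k%:R)^-1 * (k * 'C(m, r))%:R <= _).
    by rewrite ler_wpM2l ?invr_ge0 ?(ltW kR) // ler_nat sum_edges_blk // /m addn1.
  by rewrite natrM mulrA mulVf ?mul1r // gt_eqF.
have -> : r%:R / s%:R = (k%:R)^-1 :> R.
  rewrite sk natrM invfM mulrCA mulfV ?mulr1 //.
  by rewrite pnatr_eq0 -lt0n.
exact: le_trans tau_le (le_trans tw (HN n nN)).
Qed.
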